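(* If $x$ is a monic commutator in $P_n$ and $S\subseteq N$, then $\phi_S(x)=1$ if and only if $\sigma(x)\cap S\neq\emptyset$.
   Context: $P_n$ denotes the pure braid group on $n$ strands, generated by elements $p_{a,b}$ for $1\le a<b\le n$ subject to the relations: (A) $p_{a,b}p_{a,c}p_{b,c}=p_{a,c}p_{b,c}p_{a,b}=p_{b,c}p_{a,b}p_{a,c}$ for $1\le a<b<c\le n$; (B) $p_{a,b}p_{c,d}=p_{c,d}p_{a,b}$ and $p_{a,d}p_{b,c}=p_{b,c}p_{a,d}$ for $1\le a<b<c<d\le n$; (C) $p_{a,c}p_{b,c}^{-1}p_{b,d}p_{b,c}=p_{b,c}^{-1}p_{b,d}p_{b,c}p_{a,c}$ for $1\le a<b<c<d\le n$. Let $N=\{1,\dots,n\}$. For $S\subseteq N$: $P_S$ is the subgroup generated by the $p_{a,b}$ with $a,b\in S$; $\phi_S:P_n\to P_n$ is the homomorphism with $\phi_S(p_{a,b})=p_{a,b}$ if $a\notin S$ and $b\notin S$, and $\phi_S(p_{a,b})=1$ otherwise. Commutator convention: $[x,y]=x^{-1}y^{-1}xy$. Monic commutators are defined recursively: each $p_{a,b}$ and $p_{a,b}^{-1}$ ($1\le a<b\le n$) is a monic commutator; if $x,y$ are monic commutators and $[x,y]\neq1$, then $[x,y]$ is a monic commutator. The support $\sigma(x)$ of $x\in P_n$ is the intersection of all $S\subseteq N$ such that $x\in P_S$. *)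

(* Defs.v *)
(* The pure braid group P_n is encoded by its presentation:
   elements are words in the generators p_{a,b}^{±1} (a < b), and equality
   in P_n is the congruence [peq] generated by free cancellation and the
   defining relations (A), (B), (C). Strands are indexed by 'I_n (0-based). *)
From mathcomp Require Import all_boot.
Set Implicit Arguments. Unset Strict Implicit. Unset Printing Implicit Defensive.

Definition gen (n : nat) := {p : 'I_n * 'I_n | p.1 < p.2}.

(* letters: (g, false) = g, (g, true) = g^{-1} *)
Definition letter (n : nat) := (gen n * bool)%type.
Definition word (n : nat) := seq (letter n).

Definition lt_inv n (l : letter n) : letter n := (l.1, ~~ l.2).
Definition winv n (w : word n) : word n := rev (map (@lt_inv n) w).

Definition pg n (a b : 'I_n) (h : a < b) : letter n := (exist _ (a, b) h, false).
Definition pgi n (a b : 'I_n) (h : a < b) : letter n := (exist _ (a, b) h, true).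

Inductive prel (n : nat) : word n -> word n -> Prop :=
| rel_cancel (l : letter n) : prel [:: l; lt_inv l] [::]
| rel_A1 (a b c : 'I_n) (hab : a < b) (hac : a < c) (hbc : b < c) :
    prel [:: pg hab; pg hac; pg hbc] [:: pg hac; pg hbc; pg hab]
| rel_A2 (a b c : 'I_n) (hab : a < b) (hac : a < c) (hbc : b < c) :
    prel [:: pg hab; pg hac; pg hbc] [:: pg hbc; pg hab; pg hac]
| rel_B1 (a b c d : 'I_n) (hab : a < b) (hbc : b < c) (hcd : c < d) :
    prel [:: pg hab; pg hcd] [:: pg hcd; pg hab]
| rel_B2 (a b c d : 'I_n) (hab : a < b) (hbc : b < c) (hcd : c < d)
    (had : a < d) :
    prel [:: pg had; pg hbc] [:: pg hbc; pg had]
| rel_C (a b c d : 'I_n) (hab : a < b) (hbc : b < c) (hcd : c < d)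
    (hac : a < c) (hbd : b < d) :
    prel [:: pg hac; pgi hbc; pg hbd; pg hbc]
         [:: pgi hbc; pg hbd; pg hbc; pg hac].

Inductive peq (n : nat) : word n -> word n -> Prop :=
| peq_step (u v l r : word n) : prel l r -> peq (u ++ l ++ v) (u ++ r ++ v)
| peq_refl (w : word n) : peq w w
| peq_sym (w1 w2 : word n) : peq w1 w2 -> peq w2 w1
| peq_trans (w1 w2 w3 : word n) : peq w1 w2 -> peq w2 w3 -> peq w1 w3.

Definition is_one n (w : word n) : Prop := peq w [::].

Definition comm n (x y : word n) : word n := winv x ++ winv y ++ x ++ y.

Inductive monic n : word n -> Prop :=
| monic_gen (g : gen n) (e : bool) : monic [:: (g, e)]
| monic_comm (x y : word n) : monic x -> monic y -> ~ is_one (comm x y) ->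
    monic (comm x y).

Definition gen_in n (S : {set 'I_n}) (g : gen n) : bool :=
  ((sval g).1 \in S) && ((sval g).2 \in S).
Definition gen_avoids n (S : {set 'I_n}) (g : gen n) : bool :=
  ((sval g).1 \notin S) && ((sval g).2 \notin S).

Definition in_PS n (S : {set 'I_n}) (x : word n) : Prop :=
  exists w : word n, all (fun l => gen_in S l.1) w /\ peq x w.

(* phi_S, on words (it respects peq) *)
Definition phi n (S : {set 'I_n}) (x : word n) : word n :=
  filter (fun l => gen_avoids S l.1) x.

Definition in_support n (x : word n) (a : 'I_n) : Prop :=
  forall S : {set 'I_n}, in_PS S x -> a \in S.

(* Main.v *)
Require Import Defs.
From mathcomp Require Import all_boot ssralg ssrint zify.
From Stdlib Require Import Classical.
Set Implicit Arguments. Unset Strict Implicit. Unset Printing Implicit Defensive.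

Section S.
Variable n : nat.
Implicit Types u v w x y : word n.

Lemma peq_ctx p q u v : peq u v -> peq (p ++ u ++ q) (p ++ v ++ q).
Proof.
elim=> [u0 v0 l r H|w|w1 w2 _ IH|w1 w2 w3 _ IH1 _ IH2].
- have := peq_step (p ++ u0) (v0 ++ q) H. by rewrite -!catA.
- exact: peq_refl.
- exact: peq_sym.
- exact: peq_trans IH2.
Qed.

Lemma peq_cat u u' v v' : peq u u' -> peq v v' -> peq (u ++ v) (u' ++ v').
Proof.
move=> H1 H2; apply: (peq_trans (w2 := u' ++ v)).
- have := @peq_ctx [::] v _ _ H1; by [].
- have := peq_ctx u' [::] H2; by rewrite !cats0.
Qed.

Lemma peq1 (l r : word n) : prel l r -> peq l r.
Proof. move=> H; have := @peq_step _ [::] [::] _ _ H; by rewrite /= cats0 cats0. Qed.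

Lemma winv_cons (l : letter n) x : winv (l :: x) = winv x ++ [:: lt_inv l].
Proof. by rewrite /winv /= rev_cons cats1. Qed.

Lemma winvK x : peq (winv x ++ x) [::].
Proof.
elim: x => [|l x IH]; first exact: peq_refl.
rewrite winv_cons -catA.
apply: (peq_trans (w2 := winv x ++ [::] ++ x)); last by [].
change (peq (winv x ++ [:: lt_inv l; l] ++ x) (winv x ++ [::] ++ x)).
apply: peq_ctx. case: l => g e.
have := peq1 (rel_cancel (lt_inv (g, e))). by rewrite /lt_inv /= negbK.
Qed.

Lemma one_winv x : is_one x -> is_one (winv x).
Proof.
move=> H. apply: (peq_trans (w2 := winv x ++ x)); last exact: winvK.
have := peq_cat (peq_refl (winv x)) (peq_sym H); by rewrite cats0.
Qed.

Lemma phi_cat (S : {set 'I_n}) u v : phi S (u ++ v) = phi S u ++ phi S v.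
Proof. exact: filter_cat. Qed.

Lemma phi_winv (S : {set 'I_n}) x : phi S (winv x) = winv (phi S x).
Proof. by rewrite /phi /winv filter_rev filter_map. Qed.

Lemma phi_comm (S : {set 'I_n}) x y : phi S (comm x y) = comm (phi S x) (phi S y).
Proof. by rewrite /comm !phi_cat !phi_winv. Qed.

Lemma phi_prel (S : {set 'I_n}) l r : prel l r -> peq (phi S l) (phi S r).
Proof.
case=> [l0|a b c hab hac hbc|a b c hab hac hbc|a b c d hab hbc hcd
       |a b c d hab hbc hcd had|a b c d hab hbc hcd hac hbd].
- rewrite /phi /= /lt_inv /=. case: ifP => E /=; rewrite E; last by apply: peq_refl.
  exact: peq1 (rel_cancel _).
all: rewrite /phi /= /gen_avoids /=.
all: try (case: (a \in S); case: (b \in S); case: (c \in S); try case: (d \in S)) => /=.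
all: try exact: peq_refl.
all: try (apply: peq1; first [ exact: rel_A1 | exact: rel_A2 | exact: (rel_B1 _ hbc) | exact: (rel_B2 _ _ _ had) | exact: (rel_C hab hbc hcd)]).
all: idtac.
have H1 : peq [:: pgi hbc; pg hbc] [::] by exact: peq1 (rel_cancel (pgi hbc)).
apply: (peq_trans (w2 := [:: pg hac])).
  by have := peq_ctx [:: pg hac] [::] H1.
apply: peq_sym. by have := peq_ctx [::] [:: pg hac] H1.
Qed.

Lemma phi_peq (S : {set 'I_n}) u v : peq u v -> peq (phi S u) (phi S v).
Proof.
elim=> [u0 v0 l r H|w|w1 w2 _ IH|w1 w2 w3 _ IH1 _ IH2].
- rewrite !phi_cat. apply: peq_ctx. exact: phi_prel.
- exact: peq_refl.
- exact: peq_sym.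
- exact: peq_trans IH2.
Qed.

Definition fl (g : gen n) (l : letter n) : int :=
  if sval l.1 == sval g then (if l.2 then (-1)%R else 1%R) else 0%R.
Definition cnt (g : gen n) (w : word n) : int := foldr (fun l acc => (fl g l + acc)%R) 0%R w.

Lemma cnt_cat g u v : cnt g (u ++ v) = (cnt g u + cnt g v)%R.
Proof. elim: u => [|l u IH] /=; first by rewrite GRing.add0r. by rewrite IH GRing.addrA. Qed.

Lemma cnt_prel g l r : prel l r -> cnt g l = cnt g r.
Proof.
case=> [l0|a b c hab hac hbc|a b c hab hac hbc|a b c d hab hbc hcd
       |a b c d hab hbc hcd had|a b c d hab hbc hcd hac hbd] /=; try lia.
rewrite /fl /lt_inv /=. case: ifP => _ //. case: (l0.2) => /=; lia.
Qed.

Lemma cnt_peq g u v : peq u v -> cnt g u = cnt g v.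
Proof.
elim=> [u0 v0 l r H|w|w1 w2 _ IH|w1 w2 w3 _ IH1 _ IH2] //.
- by rewrite !cnt_cat (cnt_prel g H).
- by rewrite IH1.
Qed.

Lemma monic_nontriv x : monic x -> ~ is_one x.
Proof.
case=> [g e|y z _ _ //] H.
have := cnt_peq g H. rewrite /= /fl eqxx. by case: (e).
Qed.

Lemma lt_invK (l : letter n) : lt_inv (lt_inv l) = l.
Proof. by case: l => g e; rewrite /lt_inv /= negbK. Qed.

Lemma winv_invol x : winv (winv x) = x.
Proof.
rewrite /winv map_rev revK -map_comp. rewrite -[RHS]map_id. apply: eq_map => l /=. exact: lt_invK.
Qed.

Lemma peq_winv u v : peq u v -> peq (winv u) (winv v).
Proof.
move=> H.
have K : peq (v ++ winv v) [::] by have := winvK (winv v); rewrite winv_invol.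
apply: (peq_trans (w2 := winv u ++ (v ++ winv v))).
  by have := peq_cat (peq_refl (winv u)) (peq_sym K); rewrite cats0.
apply: (peq_trans (w2 := winv u ++ (u ++ winv v))).
  exact: peq_cat (peq_refl _) (peq_cat (peq_sym H) (peq_refl _)).
rewrite catA. by have := peq_cat (winvK u) (peq_refl (winv v)).
Qed.

Lemma comm_one_l y z : is_one y -> is_one (comm y z).
Proof.
move=> H. rewrite /comm.
apply: (peq_trans (w2 := [::] ++ winv z ++ [::] ++ z)).
  exact: peq_cat (one_winv H) (peq_cat (peq_refl _) (peq_cat H (peq_refl _))).
exact: winvK.
Qed.

Lemma comm_one_r y z : is_one z -> is_one (comm y z).
Proof.
move=> H. rewrite /comm.
apply: (peq_trans (w2 := winv y ++ [::] ++ y ++ [::])).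
  exact: peq_cat (peq_refl _) (peq_cat (one_winv H) (peq_cat (peq_refl _) H)).
rewrite /= cats0. exact: winvK.
Qed.

Lemma all_winv (P : pred (gen n)) w : all (fun l => P l.1) w -> all (fun l => P l.1) (winv w).
Proof. by rewrite /winv all_rev all_map. Qed.

Lemma in_PS_comm (T : {set 'I_n}) y z : in_PS T y -> in_PS T z -> in_PS T (comm y z).
Proof.
move=> [wy [Ay Py]] [wz [Az Pz]]. exists (comm wy wz); split.
  by rewrite /comm !all_cat (all_winv Ay) (all_winv Az) Ay Az.
rewrite /comm. apply: peq_cat (peq_winv Py) _. apply: peq_cat (peq_winv Pz) _.
exact: peq_cat.
Qed.

Lemma in_PS_mono (T U : {set 'I_n}) x : in_PS T x -> T \subset U -> in_PS U x.
Proof.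
move=> [w [A P]] sub. exists w; split=> //. apply: sub_all A => l.
rewrite /gen_in => /andP [h1 h2]. by rewrite !(subsetP sub).
Qed.

Lemma in_PS_inter (T U : {set 'I_n}) x : in_PS T x -> in_PS U x -> in_PS (T :&: U) x.
Proof.
move=> [w [Aw Pw]] [v [Av Pv]]. exists (phi (~: U) w); split.
  elim: w Aw {Pw} => [|l w IH] //= /andP [h1 h2]. case: ifP => E /=; last exact: IH.
  rewrite IH // andbT. move: h1 E. rewrite /gen_in /gen_avoids !in_setI !in_setC !negbK.
  by move=> /andP [-> ->] /andP [-> ->].
have Ev : phi (~: U) v = v.
  apply/all_filterP. apply: sub_all Av => l. rewrite /gen_in /gen_avoids !in_setC !negbK. done.
apply: (peq_trans (w2 := v)); first done.
rewrite -Ev. apply: phi_peq. exact: peq_trans (peq_sym Pv) Pw.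
Qed.

End S.

Theorem proposition1p5 (n : nat) (x : word n) (S : {set 'I_n}) :
  monic x ->
  (is_one (phi S x) <-> exists a : 'I_n, a \in S /\ in_support x a).
Proof.
move=> hx; split.
- move=> H1. apply: NNPP => Hno.
  have Ha : forall a, a \in S -> exists T, in_PS T x /\ a \notin T.
    move=> a aS. apply: NNPP => Hn. apply: Hno. exists a; split=> // T HT.
    apply: NNPP => aT. apply: Hn. exists T; split=> //. by apply/negP.
  have Hs : forall s : seq 'I_n, (forall a, a \in s -> a \in S) ->
      exists T, in_PS T x /\ forall a, a \in s -> a \notin T.
    elim=> [|b s IH] Hs.
      exists setT; split=> //. exists x; split; last exact: peq_refl.
      apply/allP => l _. by rewrite /gen_in !in_setT.
    have [T [HT HTs]] : exists T, in_PS T x /\ forall a, a \in s -> a \notin T.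
      apply: IH => a ai. apply: Hs. by rewrite in_cons ai orbT.
    have [U [HU bU]] := Ha b (Hs b (mem_head _ _)).
    exists (T :&: U); split; first exact: in_PS_inter.
    move=> a; rewrite in_cons in_setI => /orP [/eqP -> | ai].
      by rewrite (negbTE bU) andbF.
    by rewrite (negbTE (HTs a ai)).
  have EnS : forall a, a \in enum S -> a \in S by move=> a; rewrite mem_enum.
  have [T [[w [Aw Pw]] HT]] := Hs (enum S) EnS.
  have Ew : phi S w = w.
    apply/all_filterP. apply: sub_all Aw => l. rewrite /gen_in /gen_avoids.
    move=> /andP [h1 h2]. apply/andP; split; apply/negP => hS.
      by rewrite -mem_enum in hS; move: (HT _ hS); rewrite h1.
    by rewrite -mem_enum in hS; move: (HT _ hS); rewrite h2.
  apply: (monic_nontriv hx).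
  apply: (peq_trans Pw). rewrite -Ew. apply: (peq_trans (phi_peq S (peq_sym Pw))). exact: H1.
- move=> [a [aS Hsup]]. elim: hx Hsup => [g e|y z hy IHy hz IHz _] Hsup.
  + have : a \in [set (sval g).1; (sval g).2].
      apply: Hsup. exists [:: (g, e)]; split; last exact: peq_refl.
      by rewrite /= /gen_in !in_set2 !eqxx orbT.
    rewrite in_set2 /is_one /phi /= /gen_avoids => /orP [] /eqP <-; rewrite aS ?andbF /=; exact: peq_refl.
  + rewrite phi_comm.
    have [Hy|Hz] : in_support y a \/ in_support z a.
      apply: NNPP => Hn. suff : a \in [set~ a] by rewrite setC11. apply: Hsup.
      apply: in_PS_comm.
      * apply: NNPP => Hy. apply: Hn. left => T HT. apply: NNPP => aT. apply: Hy.
        apply: in_PS_mono HT _. apply/subsetP => b bT. rewrite in_setC1.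
        apply/eqP => E. apply: aT. by rewrite -E.
      * apply: NNPP => Hz. apply: Hn. right => T HT. apply: NNPP => aT. apply: Hz.
        apply: in_PS_mono HT _. apply/subsetP => b bT. rewrite in_setC1.
        apply/eqP => E. apply: aT. by rewrite -E.
    * exact: comm_one_l (IHy Hy).
    * exact: comm_one_r (IHz Hz).
Qed.
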